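(* Fix $y>0$ and $0\le p_1'<p_1''\le y$. Let $q_1(\cdot,\cdot)$ be APT-rationalizable, and let $\overline{p_1}$ be the minimum price $p_1\in[0,y]$ with $q_1(p_1,y)=0$. Let $F^{APT}$ be the CDF of the distribution placing probability $1-q_1(p_1',y)$ at $0$, probability $q_1(p_1',y)-q_1(p_1'',y)$ at $\overline{p_1}-p_1'$, and probability $q_1(p_1'',y)$ at $p_1''-p_1'$. Let $F^{RUM}(z)=0$ for $z<0$, $F^{RUM}(z)=1-q_1(p_1'+z,y)$ for $0\le z<p_1''-p_1'$, and $F^{RUM}(z)=1$ for $z\ge p_1''-p_1'$. Then $F^{APT}$ first-order stochastically dominates $F^{RUM}$, i.e. $F^{APT}(z)\le F^{RUM}(z)$ for all real $z$.
   Context: Two goods: good 0 (price $0$) and good 1 (price $p_1\ge0$); consumers have common income $y>0$, choose one good and spend the rest on a numeraire; $q_1(p_1,y)$ is the population probability of choosing good 1, defined for $y>0$, $p_1\in[0,y]$. $q_1$ is APT-rationalizable if there exist $U_0:(0,\infty)\to[0,\infty)$ strictly increasing, $U_1:[0,\infty)\to[0,\infty)$ continuous and strictly increasing, with: for every $y>0$ some $\bar p_1\in[0,y]$ has $U_0(y)\ge U_1(y-\bar p_1)$; and a CDF $G$ of attention thresholds with $G(0)=0$, such that $q_{1}(p_{1},y)=\mathbb{1}\{U_{0}(y)<U_{1}(y-p_{1})\}\,(1-G(p_{1}))$. (In the paper, $F^{APT}$ is the distribution of equivalent variation of the price increase from $p_1'$ to $p_1''$ identified under this model when additionally $G(t)<1$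 for all finite $t$, and $F^{RUM}$ is the distribution of equivalent variation identified under a random utility model with full attention, both from observing $q_1(p_1,y)$ for all $p_1\in[p_1',y]$.) *)

(* Defs.v *)
From Stdlib Require Import Reals Lra.
Open Scope R_scope.

Definition is_cdf (G : R -> R) : Prop :=
  (forall s t, s <= t -> G s <= G t) /\
  (forall t eps, 0 < eps -> exists d, 0 < d /\
       forall s, t <= s -> s < t + d -> Rabs (G s - G t) < eps) /\
  (forall eps, 0 < eps -> exists M, forall t, t <= M -> Rabs (G t) < eps) /\
  (forall eps, 0 < eps -> exists M, forall t, M <= t -> Rabs (G t - 1) < eps).

Definition ind {b : Prop} (d : {b} + {~ b}) : R := if d then 1 else 0.

(* q1 p1 y : probability of choosing good 1 at price p1 and income y
   (only meaningful for y > 0, 0 <= p1 <= y). *)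
Definition APT_rationalizable (q1 : R -> R -> R) : Prop :=
  exists (U0 U1 G : R -> R),
    (forall a, 0 < a -> 0 <= U0 a) /\
    (forall a b, 0 < a -> a < b -> U0 a < U0 b) /\
    (forall a, 0 <= a -> 0 <= U1 a) /\
    (forall a b, 0 <= a -> a < b -> U1 a < U1 b) /\
    (forall x eps, 0 <= x -> 0 < eps -> exists d, 0 < d /\
        forall x', 0 <= x' -> Rabs (x' - x) < d -> Rabs (U1 x' - U1 x) < eps) /\
    (forall y, 0 < y -> exists pb, 0 <= pb <= y /\ U1 (y - pb) <= U0 y) /\
    is_cdf G /\ G 0 = 0 /\
    (forall p1 y, 0 < y -> 0 <= p1 <= y ->
       q1 p1 y = ind (Rlt_dec (U0 y) (U1 (y - p1))) * (1 - G p1)).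

Definition F_APT (q1 : R -> R -> R) (y p' p'' pbar z : R) : R :=
  (1 - q1 p' y) * ind (Rle_dec 0 z)
  + (q1 p' y - q1 p'' y) * ind (Rle_dec (pbar - p') z)
  + q1 p'' y * ind (Rle_dec (p'' - p') z).

Definition F_RUM (q1 : R -> R -> R) (y p' p'' z : R) : R :=
  if Rlt_dec z 0 then 0
  else if Rlt_dec z (p'' - p') then 1 - q1 (p' + z) y
  else 1.

(* Main.v *)
Require Import Defs.
From Stdlib Require Import Reals Lra.
Open Scope R_scope.

Lemma cdf_le1 (G : R -> R) : is_cdf G -> forall t, G t <= 1.
Proof.
  intros [Hm [_ [_ Hr]]] t.
  destruct (Rle_dec (G t) 1) as [h|h]; [exact h|].
  exfalso. destruct (Hr (G t - 1)) as [M HM]; [lra|].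
  specialize (HM (Rmax M t) (Rmax_l M t)).
  assert (G t <= G (Rmax M t)) by (apply Hm; apply Rmax_r).
  apply Rabs_def2 in HM. lra.
Qed.

Lemma q1_props (q1 : R -> R -> R) (y : R) :
  0 < y -> APT_rationalizable q1 ->
  (forall p, 0 <= p <= y -> 0 <= q1 p y <= 1) /\
  (forall p p2, 0 <= p -> p <= p2 -> p2 <= y -> q1 p2 y <= q1 p y).
Proof.
  intros Hy (U0 & U1 & G & _ & _ & _ & HU1 & _ & _ & HG & HG0 & Hq).
  pose proof (cdf_le1 G HG) as Hle1.
  destruct HG as [Hm _].
  assert (Gnn : forall p, 0 <= p -> 0 <= G p).
  { intros p hp. rewrite <- HG0. apply Hm; exact hp. }
  split.
  - intros p hp. rewrite (Hq p y Hy hp). unfold ind.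
    pose proof (Hle1 p); pose proof (Gnn p (proj1 hp)); destruct (Rlt_dec (U0 y) (U1 (y - p))); unfold Defs.ind; simpl; split; lra.
  - intros p p2 h1 h2 h3.
    rewrite (Hq p y Hy (conj h1 (Rle_trans _ _ _ h2 h3))).
    rewrite (Hq p2 y Hy (conj (Rle_trans _ _ _ h1 h2) h3)).
    unfold ind.
    pose proof (Hle1 p); pose proof (Hle1 p2); pose proof (Hm p p2 h2).
    destruct (Rlt_dec (U0 y) (U1 (y - p2))) as [a|a];
    destruct (Rlt_dec (U0 y) (U1 (y - p))) as [b|b]; unfold Defs.ind; simpl; try lra.
    exfalso. apply b.
    destruct (Req_dec p p2) as [e|e].
    + subst; exact a.
    + assert (U1 (y - p2) < U1 (y - p)) by (apply HU1; lra). lra.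
Qed.

Theorem theorem5 (q1 : R -> R -> R) (y p' p'' pbar : R) :
  0 < y -> 0 <= p' -> p' < p'' -> p'' <= y ->
  APT_rationalizable q1 ->
  (* pbar is the minimum price in [0,y] with q1(pbar,y) = 0 *)
  0 <= pbar <= y -> q1 pbar y = 0 ->
  (forall p1, 0 <= p1 <= y -> q1 p1 y = 0 -> pbar <= p1) ->
  forall z : R, F_APT q1 y p' p'' pbar z <= F_RUM q1 y p' p'' z.
Proof.
  intros Hy Hp' Hlt Hp'' Hapt Hpb Hq0 _ z.
  destruct (q1_props q1 y Hy Hapt) as [Hb Hmono].
  pose proof (Hb p' ltac:(lra)) as Ba.
  pose proof (Hb p'' ltac:(lra)) as Bb.
  pose proof (Hmono p' p'' ltac:(lra) ltac:(lra) ltac:(lra)) as Mab.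
  unfold F_APT, F_RUM, Defs.ind.
  destruct (Rlt_dec z 0) as [z0|z0].
  - destruct (Rle_dec 0 z); [lra|].
    destruct (Rle_dec (p'' - p') z); [lra|].
    destruct (Rle_dec (pbar - p') z) as [c|c]; [|lra].
    pose proof (Hmono pbar p' ltac:(lra) ltac:(lra) ltac:(lra)). lra.
  - destruct (Rle_dec 0 z); [|lra].
    destruct (Rlt_dec z (p'' - p')) as [z1|z1].
    + destruct (Rle_dec (p'' - p') z); [lra|].
      pose proof (Hb (p' + z) ltac:(lra)).
      destruct (Rle_dec (pbar - p') z) as [c|c].
      * pose proof (Hmono pbar (p'+z) ltac:(lra) ltac:(lra) ltac:(lra)). lra.
      * pose proof (Hmono p' (p'+z) ltac:(lra) ltac:(lra) ltac:(lra)). lra.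
    + destruct (Rle_dec (p'' - p') z); [|lra].
      destruct (Rle_dec (pbar - p') z); lra.
Qed.
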